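(* There is an Abelian torsion group $G$ with a proper invariant metric $d_G$ such that $\operatorname{l\text{-}asdim}(G,d_G)=0$ and $\operatorname{asdim}_{AN}(G,d_G)=\infty$.
   Context: For a metric space $X$: $\operatorname{asdim}_{AN}(X)\le n$ iff there are $b,c\ge0$ such that for every $r>0$ there are families $\mathcal U_1,\dots,\mathcal U_{n+1}$ of subsets covering $X$, each $r$-disjoint (points in different members of the same family at distance $\ge r$), with members of diameter $\le cr+b$; $\operatorname{asdim}_{AN}(X)=\infty$ if no such $n$ exists. $\operatorname{l\text{-}asdim}(X)\le n$ iff there are $c>0$ and an unbounded set $U\subset\mathbb R_+$ such that for every $r\in U$ there are families $\mathcal U_1,\dots,\mathcal U_{n+1}$ covering $X$, each $r$-disjoint, with members of diameter $\le cr$. A metric on a group is invariant if $d(g+x,g+y)=d(x,y)$; proper means bounded sets are finite. *)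

(* Defs.v *)
From mathcomp Require Import all_boot all_algebra.
From Stdlib Require Import Reals.

Set Implicit Arguments.
Unset Strict Implicit.
Unset Printing Implicit Defensive.

Local Open Scope R_scope.

Definition is_metric (T : Type) (d : T -> T -> R) : Prop :=
  (forall x y, 0 <= d x y) /\
  (forall x y, d x y = 0 <-> x = y) /\
  (forall x y, d x y = d y x) /\
  (forall x y z, d x z <= d x y + d y z).

Definition invariant_metric (G : zmodType) (d : G -> G -> R) : Prop :=
  forall g x y, d (GRing.add g x) (GRing.add g y) = d x y.

Definition proper_metric (T : eqType) (d : T -> T -> R) : Prop :=
  forall (B : T -> Prop), (exists x0 r, forall y, B y -> d x0 y <= r) ->
    exists s : seq T, forall y, B y -> y \in s.

Definition torsion_group (G : zmodType) : Prop :=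
  forall x : G, exists n : nat, (0 < n)%nat /\ GRing.natmul x n = (@GRing.zero G).

Definition family (T : Type) := (T -> Prop) -> Prop.

Definition r_disjoint (T : Type) (d : T -> T -> R) (r : R) (F : family T) : Prop :=
  forall U V, F U -> F V -> U <> V -> forall x y, U x -> V y -> r <= d x y.

Definition diam_bounded (T : Type) (d : T -> T -> R) (D : R) (F : family T) : Prop :=
  forall U, F U -> forall x y, U x -> U y -> d x y <= D.

Definition good_cover (T : Type) (d : T -> T -> R) (n : nat) (r D : R)
    (Fs : nat -> family T) : Prop :=
  (forall x, exists i, (i <= n)%nat /\ exists U, Fs i U /\ U x) /\
  (forall i, (i <= n)%nat -> r_disjoint d r (Fs i)) /\
  (forall i, (i <= n)%nat -> diam_bounded d D (Fs i)).

Definition asdimAN_le (T : Type) (d : T -> T -> R) (n : nat) : Prop :=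
  exists b c, 0 <= b /\ 0 <= c /\
    forall r, 0 < r -> exists Fs : nat -> family T, good_cover d n r (c * r + b) Fs.

Definition asdimAN_infinite (T : Type) (d : T -> T -> R) : Prop :=
  forall n : nat, ~ asdimAN_le d n.

Definition lasdim_le (T : Type) (d : T -> T -> R) (n : nat) : Prop :=
  exists c, 0 < c /\ exists U : R -> Prop,
    (forall r, U r -> 0 <= r) /\ (forall M, exists r, U r /\ M < r) /\
    forall r, U r -> exists Fs : nat -> family T, good_cover d n r (c * r) Fs.

(* Main.v *)
Require Import Defs.
From mathcomp Require Import all_boot all_algebra.
From Stdlib Require Import Reals.
From Stdlib Require Import Classical ClassicalEpsilon FunctionalExtensionality PropExtensionality Lra.
From mathcomp Require Import all_boot all_algebra.
From mathcomp Require Import zify ring.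
Set Implicit Arguments.
Unset Strict Implicit.
Unset Printing Implicit Defensive.
Import GRing.Theory.

Definition shk (m Q : nat) (l k : nat) (x : {ffun 'I_m -> 'I_Q.+1}) : {ffun 'I_m -> 'I_Q.+1} :=
  [ffun j => if val j == l then inord (x j + k) else x j].

Lemma shk_val m Q l k (x : {ffun 'I_m -> 'I_Q.+1}) (j : 'I_m) : x j + k <= Q ->
  (shk l k x j : nat) = if val j == l then (x j + k)%N else x j.
Proof. move=> h; rewrite /shk ffunE; case: eqP => _ //; by rewrite inordK. Qed.

Lemma shk_inj m Q (lo : 'I_m) k (x y : {ffun 'I_m -> 'I_Q.+1}) :
  x lo + k <= Q -> y lo + k <= Q -> shk (val lo) k x = shk (val lo) k y -> x = y.
Proof.
move=> hx hy e; apply/ffunP => j.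
have := congr1 (fun f : {ffun 'I_m -> 'I_Q.+1} => (f j : nat)) e => /=.
case: (eqVneq j lo) => [->|ne].
  rewrite !shk_val //=; case: eqP => // _ h; apply/val_inj => /=; lia.

rewrite /shk !ffunE.
have -> : (val j == val lo) = false by apply/negbTE; move: ne; apply: contra => /eqP h; apply/eqP/val_inj.
by move=> h; apply/val_inj.
Qed.

Lemma shk0 m Q l (x : {ffun 'I_m -> 'I_Q.+1}) : shk l 0 x = x.
Proof. apply/ffunP => j; rewrite /shk ffunE addn0 inord_val; by case: ifP. Qed.

Lemma shkS m Q (lo : 'I_m) k (x : {ffun 'I_m -> 'I_Q.+1}) : x lo + k < Q ->
  shk (val lo) 1 (shk (val lo) k x) = shk (val lo) k.+1 x.
Proof.
move=> h; apply/ffunP => j; rewrite /shk !ffunE.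
case: eqP => e //.
have -> : j = lo by apply/val_inj.
rewrite inordK; last lia.
by rewrite addn1 addnS.
Qed.

Lemma step m Q K (lo : 'I_m) (A : {set {ffun 'I_m -> 'I_Q.+1}}) :
  (forall x, x \in A -> exists k, [/\ k <= K, x lo + k < Q,
        shk (val lo) k x \in A & shk (val lo) k.+1 x \notin A]) ->
  #|A| * K.+2 <= #|A :|: [set shk (val lo) 1 x | x in A]| * K.+1.
Proof.
move=> Hrun.
set E := [set y in A | shk (val lo) 1 y \notin A].
have EA : forall y, y \in E -> y \in A /\ y lo < Q.
  move=> y; rewrite inE => /andP [yA _]; split => //.
  have [k [_ h _ _]] := Hrun y yA; lia.
pose pr (x : {ffun 'I_m -> 'I_Q.+1}) (k : 'I_K.+1) := [&& x lo + k < Q, shk (val lo) k x \in A & shk (val lo) k.+1 x \notin A].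
pose f (x : {ffun 'I_m -> 'I_Q.+1}) := match [pick k | pr x k] with Some k => (shk (val lo) k x, k) | None => (x, ord0) end.
have hp : forall x, x \in A -> exists2 k, [pick k | pr x k] = Some k & pr x k.
  move=> x xA; case: pickP => [k hk|H]; first by exists k.
  have [k0 [kK h1 h2 h3]] := Hrun x xA.
  have kK' : k0 < K.+1 by lia.
  by move: (H (Ordinal kK')); rewrite /pr /= h1 h2 h3.
have H1 : #|A| <= #|E| * K.+1.
  have finj : {in A &, injective f}.
    move=> x y xA yA; rewrite /f.
    have [k -> /and3P [hk _ _]] := hp x xA.
    have [k' -> /and3P [hk' _ _]] := hp y yA.
    case=> e1 e2; subst k'.
    by apply: (shk_inj (lo:=lo) _ _ e1); lia.
  have -> : #|E| * K.+1 = #|setX E [set: 'I_K.+1]| by rewrite cardsX cardsT card_ord.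
  rewrite -(card_in_imset finj).
  apply: subset_leq_card; apply/subsetP => z /imsetP [x xA ->].
  rewrite /f; have [k -> /and3P [h1 h2 h3]] := hp x xA.
  by rewrite !inE /= h2 shkS // h3.
have H2 : #|A| + #|E| <= #|A :|: [set shk (val lo) 1 x | x in A]|.
  have sinj : {in E &, injective (shk (val lo) 1)}.
    move=> a b aE bE; have [_ ha] := EA a aE; have [_ hb] := EA b bE.
    by move=> e; apply: (shk_inj (lo:=lo) _ _ e); rewrite addn1.
  rewrite -(card_in_imset sinj).
  have disj : A :&: [set shk (val lo) 1 x | x in E] = set0.
    apply/setP => z; rewrite !inE; apply/negbTE/negP => /andP [zA /imsetP [y yE ez]].
    by move: yE; rewrite inE -ez zA andbF.
  have := cardsUI A [set shk (val lo) 1 x | x in E]; rewrite disj cards0 addn0 => <-.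
  apply: subset_leq_card; apply/subsetP => z; rewrite !inE => /orP [->//|/imsetP [y yE ->]].
  apply/orP; right; apply/imsetP; exists y => //; by case: (EA y yE).
nia.
Qed.

Lemma shk_lo m Q (lo : 'I_m) k (x : {ffun 'I_m -> 'I_Q.+1}) : x lo + k <= Q ->
  (shk (val lo) k x lo : nat) = x lo + k.
Proof. by move=> h; rewrite shk_val // eqxx. Qed.

Lemma shk_ne m Q (lo : 'I_m) k (x : {ffun 'I_m -> 'I_Q.+1}) (j : 'I_m) : j != lo ->
  shk (val lo) k x j = x j.
Proof.
move=> ne; rewrite /shk ffunE.
have -> : (val j == val lo) = false by apply/negbTE; move: ne; apply: contra => /eqP h; apply/eqP/val_inj.
done.
Qed.

Fixpoint th m Q (S : {set {ffun 'I_m -> 'I_Q.+1}}) (l : nat) : {set {ffun 'I_m -> 'I_Q.+1}} :=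
  match l with
  | 0 => S
  | l'.+1 => th S l' :|: [set shk l' 1 x | x in th S l']
  end.

Definition cov m Q (l : nat) (s x : {ffun 'I_m -> 'I_Q.+1}) : Prop :=
  forall j : 'I_m, if j < l then (s j <= x j) && (x j <= (s j).+1) else (x j == s j :> nat).

Lemma th_cov m Q (S : {set {ffun 'I_m -> 'I_Q.+1}}) l x :
  (forall s, s \in S -> forall j, s j < Q) -> x \in th S l ->
  exists2 s, s \in S & cov l s x.
Proof.
move=> HQ; elim: l x => [|l IH] x /=.
  by move=> xS; exists x => // j; rewrite ltn0.
rewrite inE => /orP [xA|/imsetP [y yA ->]].
  have [s sS c] := IH x xA; exists s => // j; have := c j.
  case: (ltngtP j l) => h.
  - by rewrite ltnS (ltnW h).
  - by rewrite ltnS leqNgt h.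
  - by rewrite h ltnSn => /eqP ->; rewrite leqnn leqnSn.
have [s sS c] := IH y yA; exists s => // j; have := c j.
case: (ltngtP j l) => h.
- rewrite ltnS (ltnW h).
  rewrite /shk ffunE; have -> : (val j == l) = false by apply/negbTE; rewrite neq_ltn h.
  done.
- rewrite ltnS leqNgt h /=.
  rewrite /shk ffunE; have -> : (val j == l) = false by apply/negbTE; rewrite neq_ltn h orbT.
  done.
- rewrite h ltnSn => /eqP e.
  have hj := HQ s sS j.
  rewrite /shk ffunE; have -> : (val j == l) = true by apply/eqP.
  rewrite inordK; last by rewrite e addn1 ltnS.
  by rewrite e addn1 leqnSn leqnn.
Qed.

Lemma th_lt m Q (S : {set {ffun 'I_m -> 'I_Q.+1}}) (lo : 'I_m) y :
  (forall s, s \in S -> forall j, s j < Q) -> y \in th S lo -> y lo < Q.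
Proof.
move=> HQ yA; have [s sS c] := th_cov HQ yA.
by move: (c lo); rewrite ltnn => /eqP ->; apply: HQ.
Qed.

Lemma th_run m Q K (S : {set {ffun 'I_m -> 'I_Q.+1}})
  (P : {ffun 'I_m -> 'I_Q.+1} -> {ffun 'I_m -> 'I_Q.+1} -> Prop) (lo : 'I_m) :
  (forall s, s \in S -> forall j, s j < Q) ->
  (forall s s', s \in S -> s' \in S ->
     (forall j, s j <= (s' j).+1 /\ s' j <= (s j).+1) -> P s s') ->
  (forall a b c, P a b -> P b c -> P a c) ->
  (forall s s', P s s' -> forall j, s' j <= s j + K) ->
  forall x, x \in th S lo -> exists k, [/\ k <= K, x lo + k < Q,
        shk (val lo) k x \in th S lo & shk (val lo) k.+1 x \notin th S lo].
Proof.
move=> HQ Hnear Htr Hfar x xA.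
case: (Classical_Prop.classic (exists k, [/\ k <= K, x lo + k < Q,
        shk (val lo) k x \in th S lo & shk (val lo) k.+1 x \notin th S lo])) => // Hn.
exfalso.
have inv : forall i, i <= K.+1 -> shk (val lo) i x \in th S lo /\ x lo + i < Q.
  elim=> [|i IH] hi.
    by rewrite shk0 addn0; split => //; apply: th_lt HQ xA.
  have [h1 h2] := IH (ltnW hi).
  have h3 : shk (val lo) i.+1 x \in th S lo.
    apply/negPn/negP => h3; apply: Hn; exists i; split => //.
  split => //.
  by have := th_lt HQ h3; rewrite shk_lo ?addnS.
have [s0 s0S c0] := th_cov HQ xA.
have chain : forall i, i <= K.+1 -> exists s, [/\ s \in S, cov lo s (shk (val lo) i x) & P s0 s].
  elim=> [|i IH] hi.
    exists s0; rewrite shk0; split => //; apply: Hnear => // j; split; apply: leqnSn.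
  have [s [sS c Ps]] := IH (ltnW hi).
  have [y1 hy1] := inv i (ltnW hi).
  have [y2 hy2] := inv i.+1 hi.
  have [s' s'S c'] := th_cov HQ y2.
  exists s'; split => //; apply: (Htr _ s) => //; apply: Hnear => // j.
  have := c j; have := c' j.
  case: (eqVneq j lo) => [->|ne].
    rewrite ltnn !shk_lo; [|by apply: ltnW|by apply: ltnW].
    move=> /eqP e1 /eqP e2; rewrite -e1 -e2 addnS; split; lia.
  rewrite !shk_ne //.
  case: (j < lo).
    move=> /andP [a1 a2] /andP [b1 b2]; split; [exact: leq_trans b1 a2 | exact: leq_trans a1 b2].
  by move=> /eqP -> /eqP ->; split; apply: leqnSn.
have [s [sS c Ps]] := chain K.+1 (leqnn _).
have := Hfar _ _ Ps lo.
move: (c lo) (c0 lo); rewrite ltnn shk_lo; last by apply: ltnW; case: (inv K.+1 (leqnn _)).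
move=> /eqP e1 /eqP e2; rewrite -e1 -e2; lia.
Qed.

Lemma core m Q K (S : {set {ffun 'I_m -> 'I_Q.+1}})
  (P : {ffun 'I_m -> 'I_Q.+1} -> {ffun 'I_m -> 'I_Q.+1} -> Prop) :
  (forall s, s \in S -> forall j, s j < Q) ->
  (forall s s', s \in S -> s' \in S ->
     (forall j, s j <= (s' j).+1 /\ s' j <= (s j).+1) -> P s s') ->
  (forall a b c, P a b -> P b c -> P a c) ->
  (forall s s', P s s' -> forall j, s' j <= s j + K) ->
  #|S| * K.+2 ^ m <= Q.+1 ^ m * K.+1 ^ m.
Proof.
move=> HQ Hnear Htr Hfar.
have H : forall l, l <= m -> #|S| * K.+2 ^ l <= #|th S l| * K.+1 ^ l.
  elim=> [|l IH] hl; first by rewrite !expn0 !muln1.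
  have IH' := IH (ltnW hl).
  have st := step (th_run (lo := Ordinal hl) HQ Hnear Htr Hfar).
  have st' : #|th S l| * K.+2 <= #|th S l.+1| * K.+1 := st.
  rewrite !expnS.
  apply: (@leq_trans (K.+2 * (#|th S l| * K.+1 ^ l))).
    by rewrite mulnCA leq_mul2l IH' orbT.
  apply: (@leq_trans (#|th S l.+1| * K.+1 * K.+1 ^ l)); last by rewrite mulnA.
  by rewrite mulnA (mulnC K.+2); apply: leq_mul st' (leqnn _).
apply: (leq_trans (H m (leqnn m))); apply: leq_mul => //.
have -> : Q.+1 ^ m = #|{ffun 'I_m -> 'I_Q.+1}| by rewrite card_ffun !card_ord.
exact: max_card.
Qed.

Definition GG := {poly 'Z_2}.

Definition pc (p : GG) (b : nat) : nat :=
  (\sum_(2 ^ b - 1 <= i < 2 ^ b.+1 - 1) (p`_i != 0)%R)%N.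
Definition lam (k : nat) : nat := 2 ^ (2 ^ k.+1).
Definition wt (b : nat) : nat := lam (trunc_log 2 b).
Definition nrm (p : GG) : nat := (\max_(b < size p) (wt b * pc p b))%N.

Lemma lam_gt0 k : 0 < lam k.
Proof. by rewrite expn_gt0. Qed.

Lemma lam_mono k k' : k <= k' -> lam k <= lam k'.
Proof. move=> h; rewrite /lam leq_exp2l // leq_exp2l //. Qed.

Lemma lamS k : lam k * lam k = lam k.+1.
Proof. by rewrite /lam -expnD addnn -mul2n -expnS. Qed.

Lemma pc0 (p : GG) b : size p <= 2 ^ b - 1 -> pc p b = 0.
Proof.
move=> h; rewrite /pc big_nat big1 // => i /andP [hi _].
by rewrite nth_default ?eqxx //; apply: leq_trans hi.
Qed.

Lemma pc_le (p : GG) b : pc p b <= 2 ^ b.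
Proof.
rewrite /pc; apply: leq_trans (_ : (\sum_(2 ^ b - 1 <= i < 2 ^ b.+1 - 1) 1)%N <= _).
  by apply: leq_sum => i _; case: (_ != _).
rewrite sum_nat_const_nat muln1 expnS; have := expn_gt0 2 b; lia.
Qed.

Lemma pc_ge (p : GG) b i : 2 ^ b - 1 <= i < 2 ^ b.+1 - 1 -> (p`_i != 0)%R -> 0 < pc p b.
Proof.
move=> /andP [h1 h2] nz; rewrite /pc (big_cat_nat h1 (ltnW h2)) /= [X in _ + X]big_ltn //=.
by rewrite nz addnCA addSn.
Qed.

Lemma nrm_ge (p : GG) b : wt b * pc p b <= nrm p.
Proof.
case: (ltnP b (size p)) => h.
  exact: (leq_bigmax (F := fun b : 'I_(size p) => wt b * pc p b) (Ordinal h)).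
rewrite pc0 ?muln0 //; apply: leq_trans h _.
have := ltn_expl b (isT : 1 < 2); lia.
Qed.

Lemma nrm_le (p : GG) M : (forall b, wt b * pc p b <= M) -> nrm p <= M.
Proof. by move=> h; apply/bigmax_leqP => i _; apply: h. Qed.

Lemma pc_add (p q : GG) b : pc (p + q)%R b <= pc p b + pc q b.
Proof.
rewrite /pc -big_split /=; apply: leq_sum => i _.
rewrite coefD; case: (eqVneq p`_i 0)%R => [->|]; first by rewrite GRing.add0r leq_addl.
by move=> _; case: (p`_i + q`_i != 0)%R.
Qed.

Lemma pc_opp (p : GG) b : pc (- p)%R b = pc p b.
Proof. by rewrite /pc; apply: eq_bigr => i _; rewrite coefN oppr_eq0. Qed.

Lemma nrm_add (p q : GG) : nrm (p + q)%R <= nrm p + nrm q.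
Proof.
apply: nrm_le => b; apply: leq_trans (leq_add (nrm_ge p b) (nrm_ge q b)).
by rewrite -mulnDr leq_mul2l pc_add orbT.
Qed.

Lemma nrm_opp (p : GG) : nrm (- p)%R = nrm p.
Proof. by rewrite /nrm size_polyN; apply: eq_bigr => b _; rewrite pc_opp. Qed.

Lemma blk i : let b := trunc_log 2 i.+1 in 2 ^ b - 1 <= i < 2 ^ b.+1 - 1.
Proof.
have := trunc_log_bounds (isT : 1 < 2) (ltn0Sn i) => /= /andP [h1 h2].
apply/andP; split; lia.
Qed.

Lemma nrm_pos (p : GG) i : (p`_i != 0)%R -> lam (trunc_log 2 (trunc_log 2 i.+1)) <= nrm p.
Proof.
move=> nz; apply: leq_trans (nrm_ge p (trunc_log 2 i.+1)).
rewrite /wt -{1}(muln1 (lam _)) leq_mul2l; apply/orP; right.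
by apply: pc_ge (blk i) nz.
Qed.

Lemma nrm0 : nrm 0%R = 0.
Proof. by rewrite /nrm size_poly0 big_ord0. Qed.

Lemma nrm_eq0 (p : GG) : nrm p = 0 -> p = 0%R.
Proof.
move=> h; apply/eqP; apply/negPn/negP => nz.
have nz' : (p`_(size p).-1 != 0)%R by rewrite -lead_coefE lead_coef_eq0.
have := nrm_pos nz'; rewrite h; have := lam_gt0 (trunc_log 2 (trunc_log 2 (size p).-1.+1)); lia.
Qed.

Definition NN k := 2 ^ (2 ^ k.+1) - 1.

Lemma lv_hi b k : b < 2 ^ k.+1 -> trunc_log 2 b <= k.
Proof.
move=> h; case: b h => [|b] h; first by rewrite trunc_log0.
have := trunc_logP (isT : 1 < 2) (ltn0Sn b) => h2.
have : 2 ^ trunc_log 2 b.+1 < 2 ^ k.+1 by apply: leq_ltn_trans h2 h.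
by rewrite ltn_exp2l.
Qed.

Lemma small_nrm (p : GG) k : size p <= NN k -> nrm p <= lam k.+1.
Proof.
move=> h; apply: nrm_le => b.
case: (ltnP b (2 ^ k.+1)) => hb.
  rewrite -lamS; apply: leq_mul.
    by apply: lam_mono; apply: lv_hi.
  apply: leq_trans (pc_le p b) _; rewrite /lam leq_exp2l //; exact: ltnW.
rewrite pc0 ?muln0 //; apply: leq_trans h _; rewrite /NN.
have : 2 ^ (2 ^ k.+1) <= 2 ^ b by rewrite leq_exp2l.
lia.
Qed.

Lemma big_nrm (p : GG) k : NN k < size p -> lam k.+1 <= nrm p.
Proof.
move=> h.
have nz' : (p`_(size p).-1 != 0)%R.
  by rewrite -lead_coefE lead_coef_eq0 -size_poly_gt0; lia.
set i := (size p).-1.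
apply: leq_trans (nrm_ge p (trunc_log 2 i.+1)).
rewrite -(muln1 (lam _)); apply: leq_mul; last by apply: pc_ge (blk i) nz'.
apply: lam_mono; apply: trunc_log_max => //.
have := blk i => /= /andP [_ h2].
have p1 := expn_gt0 2 (2 ^ k.+1).
have p2 := expn_gt0 2 (trunc_log 2 i.+1).+1.
have : 2 ^ (2 ^ k.+1) < 2 ^ (trunc_log 2 i.+1).+1.
  move: h h2; rewrite /NN /i; lia.
by rewrite ltn_exp2l.
Qed.

Lemma z2 (a b : bool) : ((a%:R - b%:R : 'Z_2) != 0)%R = (a != b).
Proof. by case: a; case: b. Qed.

Lemma inblk_uniq b b' i : 2 ^ b - 1 <= i < 2 ^ b.+1 - 1 -> 2 ^ b' - 1 <= i < 2 ^ b'.+1 - 1 -> b = b'.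
Proof.
move=> h h'.
have p1 := expn_gt0 2 b; have p2 := expn_gt0 2 b'.
have p3 := expn_gt0 2 b.+1; have p4 := expn_gt0 2 b'.+1.
have e1 : trunc_log 2 i.+1 = b by apply: trunc_log_eq => //; move: h; lia.
have e2 : trunc_log 2 i.+1 = b' by apply: trunc_log_eq => //; move: h'; lia.
by rewrite -e1 -e2.
Qed.

Lemma sum_diff s L a a' : a <= L -> a' <= L ->
  (\sum_(s <= i < s + L) ((i < s + a) != (i < s + a')))%N = (a - a') + (a' - a).
Proof.
wlog h : a a' / a <= a'.
  move=> W ha ha'; case: (leqP a a') => h; first exact: W.
  rewrite [RHS]addnC -(W a' a (ltnW h) ha' ha).
  by apply: eq_bigr => i _; rewrite eq_sym.
move=> ha ha'.
have -> : a - a' = 0 by lia.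
rewrite add0n.
have A1 : (\sum_(s <= i < s + a) ((i < s + a) != (i < s + a')))%N = 0.
  rewrite (eq_big_nat _ _ (F2 := fun _ => 0)) ?sum_nat_const_nat ?muln0 // => i /andP [_ hi].
  by rewrite hi (leq_trans hi) // leq_add2l.
have A2 : (\sum_(s + a <= i < s + a') ((i < s + a) != (i < s + a')))%N = a' - a.
  rewrite (eq_big_nat _ _ (F2 := fun _ => 1)) ?sum_nat_const_nat ?muln1; last first.
    by move=> i /andP [h1 h2]; rewrite ltnNge h1 h2.
  lia.
have A3 : (\sum_(s + a' <= i < s + L) ((i < s + a) != (i < s + a')))%N = 0.
  rewrite (eq_big_nat _ _ (F2 := fun _ => 0)) ?sum_nat_const_nat ?muln0 // => i /andP [hi _].
  by rewrite !ltnNge hi (leq_trans _ hi) // leq_add2l.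
rewrite (@big_cat_nat _ _ _ (s + a)) ?leq_addr ?leq_add2l //=.
rewrite (@big_cat_nat _ _ _ (s + a') (s + a)) ?leq_add2l //=.
move: A1 A2 A3; lia.
Qed.

Definition bj k m (j : 'I_m) := 2 ^ k + j.
Definition stj k m (j : 'I_m) := 2 ^ (bj k j) - 1.
Definition codef k m Q (t : {ffun 'I_m -> 'I_Q.+1}) (i : nat) : bool :=
  [exists j : 'I_m, (stj k j <= i) && (i < stj k j + t j)].
Definition code k m Q (t : {ffun 'I_m -> 'I_Q.+1}) : GG :=
  (\poly_(i < 2 ^ (2 ^ k.+1)) (codef k t i)%:R)%R.

Lemma codef_blk k m Q (t : {ffun 'I_m -> 'I_Q.+1}) b i :
  Q <= 2 ^ (2 ^ k) -> 2 ^ b - 1 <= i < 2 ^ b.+1 - 1 ->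
  codef k t i = [exists j : 'I_m, (bj k j == b) && (i < stj k j + t j)].
Proof.
move=> hQ hi; apply/existsP/existsP => [] [j /andP [h1 h2]]; exists j; apply/andP; split => //.
  apply/eqP; apply: (@inblk_uniq _ _ i) => //.
  rewrite /stj in h1 h2 *; apply/andP; split => //.
  apply: (leq_trans h2).
  have tq : t j <= Q by rewrite -ltnS.
  have : 2 ^ (2 ^ k) <= 2 ^ (bj k j) by rewrite leq_exp2l // leq_addr.
  have := expn_gt0 2 (bj k j); rewrite expnS; lia.
move/eqP: h1 => <- in hi; rewrite /stj; by case/andP: hi.
Qed.

Lemma code_coef k m Q (t : {ffun 'I_m -> 'I_Q.+1}) i :
  m <= 2 ^ k -> Q <= 2 ^ (2 ^ k) -> ((code k t)`_i = (codef k t i)%:R)%R.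
Proof.
move=> hm hQ; rewrite /code coef_poly; case: ifP => // hi.
case: (codef k t i) / existsP => [[j /andP [h1 h2]]|//].
exfalso; move/negbT: hi; rewrite -leqNgt => hi.
have tq : t j <= Q by rewrite -ltnS.
have h3 : 2 ^ (2 ^ k) <= 2 ^ (bj k j) by rewrite leq_exp2l // leq_addr.
have h4 : 2 ^ (bj k j).+1 <= 2 ^ (2 ^ k.+1).
  rewrite leq_exp2l // /bj expnS; have := ltn_ord j; lia.
have p : 0 < 2 ^ bj k j by rewrite expn_gt0.
rewrite [2 ^ (bj k j).+1]expnS in h4; move: h2 hi h4 h3 tq; rewrite /stj; lia.
Qed.

Lemma pc_code k m Q (t t' : {ffun 'I_m -> 'I_Q.+1}) b :
  m <= 2 ^ k -> Q <= 2 ^ (2 ^ k) ->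
  pc (code k t - code k t')%R b =
  if [pick j : 'I_m | bj k j == b] is Some j then (t j - t' j) + (t' j - t j) else 0.
Proof.
move=> hm hQ.
have E : forall i, 2 ^ b - 1 <= i < 2 ^ b.+1 - 1 ->
   nat_of_bool (((code k t - code k t')`_i != 0)%R) =
   nat_of_bool ([exists j : 'I_m, (bj k j == b) && (i < stj k j + t j)] !=
   [exists j : 'I_m, (bj k j == b) && (i < stj k j + t' j)]).
  move=> i hi; rewrite coefB !code_coef // z2.
  by rewrite (codef_blk t hQ hi) (codef_blk t' hQ hi).
rewrite /pc (eq_big_nat _ _ E).
case: pickP => [j /eqP hj|none].
  have F : forall i, 2 ^ b - 1 <= i < 2 ^ b.+1 - 1 ->
    nat_of_bool ([exists j : 'I_m, (bj k j == b) && (i < stj k j + t j)] !=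
     [exists j : 'I_m, (bj k j == b) && (i < stj k j + t' j)]) =
    nat_of_bool ((i < stj k j + t j) != (i < stj k j + t' j)).
    move=> i hi.
    have G : forall (u : {ffun 'I_m -> 'I_Q.+1}),
       [exists j : 'I_m, (bj k j == b) && (i < stj k j + u j)] = (i < stj k j + u j).
      move=> u; apply/existsP/idP => [[j' /andP [/eqP h1 h2]]|h]; last by exists j; rewrite hj eqxx.
      have : j' = j by apply: ord_inj; move: h1 hj; rewrite /bj; lia.
      by move=> e; rewrite -e.
    by rewrite !G.
  rewrite (eq_big_nat _ _ F).
  have e1 : 2 ^ b.+1 - 1 = stj k j + 2 ^ b.
    rewrite /stj hj expnS; have := expn_gt0 2 b; lia.
  have e0 : 2 ^ b - 1 = stj k j by rewrite /stj hj.
  have hb : Q <= 2 ^ b by apply: (leq_trans hQ); rewrite -hj leq_exp2l // leq_addr.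
  have tq1 : t j <= Q by rewrite -ltnS.
  have tq2 : t' j <= Q by rewrite -ltnS.
  rewrite e1 e0; apply: sum_diff; [exact: leq_trans tq1 hb | exact: leq_trans tq2 hb].
rewrite big_nat big1 // => i _.
have N : forall (u : {ffun 'I_m -> 'I_Q.+1}),
   [exists j : 'I_m, (bj k j == b) && (i < stj k j + u j)] = false.
  move=> u; apply/existsP => [[j /andP [h _]]]; by rewrite none in h.
by rewrite !N.
Qed.

Lemma lv_bj k m (j : 'I_m) : m <= 2 ^ k -> trunc_log 2 (bj k j) = k.
Proof.
move=> hm; apply: trunc_log_eq => //; rewrite /bj expnS mul2n -addnn leq_addr /= ltn_add2l.
exact: leq_trans (ltn_ord j) hm.
Qed.

Lemma dist_up k m Q (t t' : {ffun 'I_m -> 'I_Q.+1}) :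
  m <= 2 ^ k -> Q <= 2 ^ (2 ^ k) ->
  (forall j, t j <= (t' j).+1 /\ t' j <= (t j).+1) ->
  nrm (code k t - code k t')%R <= lam k.
Proof.
move=> hm hQ H; apply: nrm_le => b; rewrite pc_code //.
case: pickP => [j /eqP hj|_]; last by rewrite muln0.
rewrite /wt -hj lv_bj // -{2}(muln1 (lam k)) leq_mul2l; have := H j; lia.
Qed.

Lemma dist_lo k m Q (t t' : {ffun 'I_m -> 'I_Q.+1}) (j : 'I_m) :
  m <= 2 ^ k -> Q <= 2 ^ (2 ^ k) ->
  lam k * (t' j - t j) <= nrm (code k t - code k t')%R.
Proof.
move=> hm hQ; apply: leq_trans (nrm_ge _ (bj k j)).
rewrite pc_code //; case: pickP => [j' /eqP hj'|/(_ j)]; last by rewrite eqxx.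
have e : j' = j by apply: ord_inj; move: hj'; rewrite /bj; lia.
subst j'; rewrite /wt lv_bj // leq_mul2l leq_addl orbT //.
Qed.
Local Open Scope ring_scope.
Delimit Scope R_scope with Re.

Definition dG (x y : GG) : R := INR (nrm (x - y)).

Lemma leR (a b : nat) : (a <= b)%N -> (INR a <= INR b)%Re.
Proof. by move=> /leP; apply: le_INR. Qed.
Lemma ltR (a b : nat) : (a < b)%N -> (INR a < INR b)%Re.
Proof. by move=> /ltP; apply: lt_INR. Qed.
Lemma Rlt_nat (a b : nat) : (INR a < INR b)%Re -> (a < b)%N.
Proof. by move=> h; apply/ltP; apply: INR_lt. Qed.
Lemma Rle_nat (a b : nat) : (INR a <= INR b)%Re -> (a <= b)%N.
Proof. by move=> h; apply/leP; apply: INR_le. Qed.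

Lemma dG_metric : is_metric dG.
Proof.
split; first by move=> x y; apply: pos_INR.
split.
  move=> x y; split.
    move=> h; apply/eqP; rewrite -subr_eq0; apply/eqP; apply: nrm_eq0.
    by apply: INR_eq; rewrite INR_0.
  by move=> ->; rewrite /dG subrr nrm0.
split.
  by move=> x y; rewrite /dG -opprB nrm_opp.
move=> x y z; rewrite /dG -plus_INR; apply: leR.
have -> : (x - z = (x - y) + (y - z)) by rewrite addrA subrK.
exact: nrm_add.
Qed.

Lemma dG_inv : invariant_metric dG.
Proof. by move=> g x y; rewrite /dG opprD addrACA subrr add0r. Qed.

Lemma torsion_GG : torsion_group GG.
Proof.
move=> x; exists 2; split => //; apply/polyP => i.
rewrite coefMn coef0; case: (x`_i) => [[|[|n]]] h //; apply/val_inj => /=; by rewrite /Zp_trunc.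
Qed.

Lemma sz_add (p q : GG) N : (leq (size p) N) -> (leq (size q) N) -> (leq (size (p + q)) N).
Proof. by move=> h1 h2; apply: leq_trans (size_polyD p q) _; rewrite geq_max h1 h2. Qed.
Lemma sz_opp (p : GG) N : (leq (size p) N) -> (leq (size (- p)) N).
Proof. by rewrite size_polyN. Qed.

Lemma lam_big k : (k < lam k)%N.
Proof.
have h1 := ltn_expl k.+1 (isT : (1 < 2)%N).
have h2 := ltn_expl (2 ^ k.+1) (isT : (1 < 2)%N).
rewrite /lam; lia.
Qed.

Lemma nrm_small_size (p : GG) k : (nrm p < lam k.+1)%N -> (leq (size p) (NN k)).
Proof. move=> h; rewrite leqNgt; apply/negP => h2; have := big_nrm h2; lia. Qed.

Lemma dG_proper : proper_metric dG.
Proof.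
move=> B [x0 [r Hr]].
have [k hk] := INR_unbounded r.
set N := NN k.
exists [seq x0 - \poly_(i < N.+1) f (inord i) | f : {ffun 'I_N.+1 -> 'Z_2} <- enum {ffun 'I_N.+1 -> 'Z_2}].
move=> y By.
have hs : (leq (size (x0 - y)) N).
  apply: nrm_small_size; apply: Rlt_nat; have := Hr y By; rewrite /dG => h.
  have := ltR (lam_big k.+1); have := ltR (ltnSn k); lra.
set q := x0 - y.
apply/mapP; exists [ffun o : 'I_N.+1 => q`_o]; first by rewrite mem_enum.
have -> : \poly_(i < N.+1) [ffun o : 'I_N.+1 => q`_o] (inord i) = q.
  apply/polyP => i; rewrite coef_poly; case: ifP => hi.
    by rewrite ffunE inordK.
  rewrite nth_default //; apply: leq_trans hs _; move/negbT: hi; rewrite -leqNgt; exact: ltnW.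
by rewrite /q opprB addrC subrK.
Qed.

Lemma dG_lasdim : lasdim_le dG 0.
Proof.
exists 1%Re; split; first lra.
exists (fun r => exists k, r = INR (lam k.+1)); split.
  by move=> r [k ->]; apply: pos_INR.
split.
  move=> M; have [k hk] := INR_unbounded M; exists (INR (lam k.+1)); split; first by exists k.
  have := ltR (lam_big k.+1); have := ltR (ltnSn k); lra.
move=> r [k ->].
exists (fun _ => fun V => exists x : GG, V = fun y : GG => is_true (leq (size (y - x)) (NN k))).
split; [|split].
- move=> x; exists 0%N; split => //; exists (fun y : GG => is_true (leq (size (y - x)) (NN k))); split.
    by exists x.
  by rewrite subrr size_poly0.
- move=> i _ V W [x1 ->] [x2 ->] ne y z hy hz.
  case: (Rle_lt_dec (INR (lam k.+1)) (dG y z)) => // hlt; exfalso; apply: ne.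
  have hyz : (leq (size (y - z)) (NN k)) by apply: nrm_small_size; apply: Rlt_nat.
  apply: functional_extensionality => w; apply: propositional_extensionality; split => h.
  + have -> : w - x2 = (w - x1) + ((- (y - x1)) + ((y - z) + (z - x2))).
      by ring.
    by do ! apply: sz_add => //; apply: sz_opp.
  + have -> : w - x1 = (w - x2) + ((- (z - x2)) + ((- (y - z)) + (y - x1))).
      by ring.
    by do ! apply: sz_add => //; apply: sz_opp.
- move=> i _ V [x ->] y z hy hz.
  rewrite Rmult_1_l /dG; apply: leR; apply: small_nrm.
  have -> : y - z = (y - x) + (- (z - x)) by ring.
  by apply: sz_add => //; apply: sz_opp.
Qed.

Lemma expn_mono a b m : (a <= b)%N -> (a ^ m <= b ^ m)%N.
Proof. by move=> h; elim: m => [|m IH] //; rewrite !expnS leq_mul. Qed.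

Lemma bern a m : (a ^ m * (a + m) <= a * a.+1 ^ m)%N.
Proof.
elim: m => [|m IH]; first by rewrite !expn0 mul1n addn0 muln1.
have h := expn_mono m (leqnSn a).
rewrite !expnS.
have e1 : (a * a ^ m * (a + m.+1) = a * (a ^ m * (a + m)) + a * a ^ m)%N.
  by ring.
rewrite e1.
have e2 : (a * (a.+1 * a.+1 ^ m) = a * (a * a.+1 ^ m) + a * a.+1 ^ m)%N.
  by ring.
rewrite e2; apply: leq_add; first by rewrite leq_mul2l IH orbT.
by rewrite leq_mul2l h orbT.
Qed.

Lemma union_bound (T : finType) (F : nat -> {set T}) N X Y :
  (forall i, (i < N)%N -> (#|F i| * X <= Y)%N) -> (#|\bigcup_(i < N) F i| * X <= N * Y)%N.
Proof.
elim: N => [|N IH] H; first by rewrite big_ord0 cards0.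
rewrite big_ord_recr /= mulSn.
apply: leq_trans (_ : ((#|\bigcup_(i < N) F i| + #|F N|) * X <= _)%N).
  by rewrite leq_mul2r (leq_card_setU _ _) orbT.
rewrite mulnDl addnC; apply: leq_add; first by apply: H.
by apply: IH => i hi; apply: H; apply: ltnW.
Qed.

Lemma box_card m Q : (Q ^ m <= #|[set t : {ffun 'I_m -> 'I_Q.+1} | [forall j, t j < Q]]|)%N.
Proof.
pose g (f : {ffun 'I_m -> 'I_Q}) : {ffun 'I_m -> 'I_Q.+1} := [ffun j => widen_ord (leqnSn Q) (f j)].
have ginj : injective g.
  move=> f1 f2 e; apply/ffunP => j; apply/val_inj.
  by have := congr1 (fun f : {ffun 'I_m -> 'I_Q.+1} => (f j : nat)) e; rewrite /g !ffunE.
have -> : (Q ^ m = #|[set g f | f in [set: {ffun 'I_m -> 'I_Q}]]|)%N.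
  by rewrite card_imset // cardsT card_ffun !card_ord.
apply: subset_leq_card; apply/subsetP => t /imsetP [f _ ->]; rewrite inE.
by apply/forallP => j; rewrite /g ffunE /=.
Qed.

Definition pb (P : Prop) : bool := if excluded_middle_informative P then true else false.
Lemma pbE P : pb P -> P.
Proof. by rewrite /pb; case: excluded_middle_informative. Qed.
Lemma pbI (P : Prop) : P -> pb P.
Proof. by rewrite /pb; case: excluded_middle_informative. Qed.

Lemma dG_infinite : asdimAN_infinite dG.
Proof.
move=> n [b [c [hb [hc H]]]].
have [K hK] := INR_unbounded (2 * c + b)%Re.
set Q := K.+2.
set a := (K.+1 * K.+3)%N.
set m := (n.+1 * a)%N.
set k := (m + Q)%N.
have hm : (m <= 2 ^ k)%N.
  apply: ltnW; apply: leq_trans (ltn_expl m (isT : (1 < 2)%N)) _.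
  by rewrite leq_exp2l // leq_addr.
have hQ : (Q <= 2 ^ (2 ^ k))%N.
  have h1 := ltn_expl k (isT : (1 < 2)%N).
  have h2 := ltn_expl (2 ^ k) (isT : (1 < 2)%N).
  rewrite /k in h1 h2 *; lia.
have L1 : (1 <= INR (lam k))%Re by apply: (leR (lam_gt0 k)).
have rpos : (0 < INR (lam k) + 1)%Re by lra.
have [Fs [Hcov [Hdisj Hdiam]]] := H (INR (lam k) + 1)%Re rpos.
pose S (i : nat) := [set t : {ffun 'I_m -> 'I_Q.+1} |
   [forall j, (t j < Q)%N] && pb (exists U, Fs i U /\ U (code k t))].
have bound : forall i, (i < n.+1)%N -> (#|S i| * K.+2 ^ m <= Q.+1 ^ m * K.+1 ^ m)%N.
  move=> i hi.
  have hin : (i <= n)%N by [].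
  apply: (core (P := fun s s' => exists U, [/\ Fs i U, U (code k s) & U (code k s')])).
  - by move=> s; rewrite inE => /andP [/forallP h _].
  - move=> s s'; rewrite !inE => /andP [_ /pbE [U [FU Us]]] /andP [_ /pbE [U' [FU' Us']]] near.
    exists U; split => //.
    case: (classic (U = U')) => [->//|ne]; exfalso.
    have h1 := Hdisj i hin U U' FU FU' ne _ _ Us Us'.
    have h2 := leR (dist_up hm hQ near).
    rewrite /dG in h1; lra.
  - move=> x y z [U [FU Ux Uy]] [V [FV Vy Vz]].
    exists U; split => //.
    case: (classic (U = V)) => [->//|ne]; exfalso.
    have h1 := Hdisj i hin U V FU FV ne _ _ Uy Vy.
    rewrite /dG subrr nrm0 INR_0 in h1; lra.
  - move=> s s' [U [FU Us Us']] j.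
    rewrite leqNgt; apply/negP => hgt.
    have h1 := Hdiam i hin U FU _ _ Us Us'.
    have h2 := @dist_lo k m Q s s' j hm hQ.
    have h3 : leq (lam k * K.+1)%N (nrm (code k s - code k s')).
      apply: leq_trans h2; rewrite leq_mul2l; apply/orP; right; lia.
    have h4 := leR h3; rewrite mult_INR S_INR in h4.
    rewrite /dG in h1.
    have hK0 : (0 <= INR K)%Re by apply: pos_INR.
    nra.
have hbox : [set t : {ffun 'I_m -> 'I_Q.+1} | [forall j, (t j < Q)%N]] \subset \bigcup_(i < n.+1) S i.
  apply/subsetP => t; rewrite inE => ht.
  have [i [hi [U [FU Ut]]]] := Hcov (code k t).
  apply/bigcupP; exists (Ordinal (hi : (i < n.+1)%N)) => //.
  rewrite inE ht /=; apply: pbI; by exists U.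
have tot := leq_trans (box_card m Q) (subset_leq_card hbox).
have ub := union_bound (F := S) (X := K.+2 ^ m) bound.
have tot2 := leq_trans (leq_mul tot (leqnn (K.+2 ^ m))) ub.
have f1 : (Q * K.+2 = a.+1)%N by rewrite /Q /a; ring.
have e1 : (Q ^ m * K.+2 ^ m = a.+1 ^ m)%N by rewrite -expnMn f1.
have f2 : (Q.+1 * K.+1 = a)%N by rewrite /Q /a; ring.
have e2 : (Q.+1 ^ m * K.+1 ^ m = a ^ m)%N by rewrite -expnMn f2.
rewrite e1 e2 in tot2.
have hb2 := bern a m.
have apos : (0 < a)%N by [].
have ampos : (0 < a ^ m)%N by rewrite expn_gt0 apos.
have : (a ^ m * (a + m) <= a ^ m * (a * n.+1))%N.
  have t3 := leq_mul (leqnn a) tot2.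
  apply: leq_trans hb2 (leq_trans t3 _); apply: eq_leq; ring.
rewrite leq_mul2l (gtn_eqF ampos) /= /m; nia.
Qed.

Theorem mainTheorem17 :
  exists (G : zmodType) (d : G -> G -> R),
    torsion_group G /\ is_metric d /\ invariant_metric d /\ proper_metric d /\
    lasdim_le d 0 /\ asdimAN_infinite d.
Proof.
exists (GG : zmodType), dG.
split; first exact: torsion_GG.
split; first exact: dG_metric.
split; first exact: dG_inv.
split; first exact: dG_proper.
split; first exact: dG_lasdim.
exact: dG_infinite.
Qed.
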